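(* For any algorithm for preference-based RL with trajectory preferences, there exists a $\tilde d_{\mathbb{P}}$-dimensional linear mixture MDP with a $\tilde d_{\mathbb{T}}$-dimensional linear preference function such that the regret incurred by this algorithm over $K$ episodes is at least $\Omega(\tilde d_{\mathbb{P}}\sqrt{K}+\tilde d_{\mathbb{T}}\sqrt{K})$.
   Context: Preference-based RL: episodic MDP $(\mathcal{S},\mathcal{A},H,\mathbb{P})$ with fixed initial state $s_1$, no rewards, trajectories $\tau=(s_1,a_1,\dots,s_H,a_H)\in\mathrm{Traj}$, $\Pi$ the set of history-dependent policies. In each episode $k=1,\dots,K$ the agent runs two policies $\pi_{k,1},\pi_{k,2}$, obtains trajectories $\tau_{k,1},\tau_{k,2}$, and observes $o_k\sim\mathrm{Bernoulli}(\mathbb{T}(\tau_{k,1},\tau_{k,2}))$, where $\mathbb{T}:\mathrm{Traj}\times\mathrm{Traj}\to[0,1]$ is an unknown preference function with $\mathbb{T}(\tau_1,\tau_2)+\mathbb{T}(\tau_2,\tau_1)=1$. $\mathbb{T}(\pi_1,\pi_2)=\mathbb{E}_{\tau_1\sim(\mathbb{P},\pi_1),\tau_2\sim(\mathbb{P},\pi_2)}\mathbb{T}(\tau_1,\tau_2)$; it is assumed there is $\pi^*$ with $\mathbb{T}(\pi^*,\pi_0)\ge\frac12$ for all $\pi_0\in\Pi$; regret $Reg(K)=\sum_{k=1}^K\sum_{i=1}^2(\mathbb{T}(\pi^*,\pi_{k,i})-\frac12)$. A $\tilde d_{\mathbb{P}}$-dimensional linear mixture MDP has $\mathbb{P}(s'|s,a)=\psi(s,a,s')^\top\theta$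 with known $\psi:\mathcal{S}\times\mathcal{A}\times\mathcal{S}\to\mathbb{R}^{\tilde d_{\mathbb{P}}}$ satisfying $\|\sum_{s'}\psi(s,a,s')V(s')\|_2\le1$ for all $V:\mathcal{S}\to[0,1]$ and unknown bounded $\theta$; a $\tilde d_{\mathbb{T}}$-dimensional linear preference function is $\mathbb{T}(\tau_1,\tau_2)=\phi(\tau_1,\tau_2)^\top\vartheta$ for a known feature map $\phi:\mathrm{Traj}\times\mathrm{Traj}\to\mathbb{R}^{\tilde d_{\mathbb{T}}}$ and unknown bounded $\vartheta$. *)

(* Defs.v *)
From mathcomp Require Import all_boot all_order all_algebra.
From mathcomp Require Import reals.
Set Implicit Arguments. Unset Strict Implicit. Unset Printing Implicit Defensive.
Import Order.TTheory GRing.Theory Num.Theory.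
Local Open Scope ring_scope.

Section PbRL.
Variable R : realType.
Variables (S A : finType) (H : nat).

Definition Traj := (H.-tuple (S * A))%type.

(* history-dependent (within an episode) stochastic policy:
   pi past s a = probability of action a in current state s, given the
   previous state-action pairs [past] of the current episode. *)
Definition policy := seq (S * A) -> S -> A -> R.

Definition valid_policy (pi : policy) : Prop :=
  forall past s, (forall a, 0 <= pi past s a) /\ \sum_a pi past s a = 1.

(* transition kernel P s a s' = P(s'|s,a) *)
Definition kernel := S -> A -> S -> R.

Definition valid_kernel (P : kernel) : Prop :=
  forall s a, (forall s', 0 <= P s a s') /\ \sum_s' P s a s' = 1.

Fixpoint trans_prob (P : kernel) (x : S * A) (rest : seq (S * A)) : R :=
  match rest with
  | [::] => 1
  | y :: r => P x.1 x.2 y.1 * trans_prob P y r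
  end.

Fixpoint pol_prob (pi : policy) (past : seq (S * A)) (rest : seq (S * A)) : R :=
  match rest with
  | [::] => 1
  | y :: r => pi past y.1 y.2 * pol_prob pi (rcons past y) r
  end.

Definition traj_prob (P : kernel) (s1 : S) (pi : policy) (tau : Traj) : R :=
  match val tau with
  | [::] => 1
  | x :: r => (x.1 == s1)%:R * trans_prob P x r * pol_prob pi [::] (x :: r)
  end.

Definition prefT := Traj -> Traj -> R.

Definition valid_pref (T : prefT) : Prop :=
  forall t1 t2, 0 <= T t1 t2 <= 1 /\ T t1 t2 + T t2 t1 = 1.

Definition pref_pol (P : kernel) (s1 : S) (T : prefT) (pi1 pi2 : policy) : R :=
  \sum_(t1 : Traj) \sum_(t2 : Traj)
     traj_prob P s1 pi1 t1 * traj_prob P s1 pi2 t2 * T t1 t2.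

Definition is_winner (P : kernel) (s1 : S) (T : prefT) (pis : policy) : Prop :=
  valid_policy pis /\
  forall pi0, valid_policy pi0 -> 1 / 2%:R <= pref_pol P s1 T pis pi0.

(* data observed in one episode: (tau_{k,1}, tau_{k,2}, o_k) *)
Definition episode_data := (Traj * Traj * bool)%type.

(* a (deterministic given its seed) algorithm: from the past data, the pair of
   policies (pi_{k,1}, pi_{k,2}) to run in the next episode *)
Definition algo := seq episode_data -> (policy * policy).

Fixpoint exp_regret_from (P : kernel) (s1 : S) (T : prefT) (pis : policy)
  (alg : algo) (n : nat) (hist : seq episode_data) : R :=
  match n with
  | 0 => 0
  | n'.+1 =>
    let pp := alg hist in
    (pref_pol P s1 T pis pp.1 - 1 / 2%:R) + (pref_pol P s1 T pis pp.2 - 1 / 2%:R)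
    + \sum_(t1 : Traj) \sum_(t2 : Traj)
        traj_prob P s1 pp.1 t1 * traj_prob P s1 pp.2 t2 *
        (T t1 t2 * exp_regret_from P s1 T pis alg n' (rcons hist (t1, t2, true))
         + (1 - T t1 t2) * exp_regret_from P s1 T pis alg n' (rcons hist (t1, t2, false)))
  end.

(* E[Reg(K)] for a randomized algorithm: seed u ~ mu, then run alg u *)
Definition exp_regret (U : finType) (mu : U -> R) (alg : U -> algo)
  (P : kernel) (s1 : S) (T : prefT) (pis : policy) (K : nat) : R :=
  \sum_u mu u * exp_regret_from P s1 T pis (alg u) K [::].

Definition dotr (d : nat) (u v : 'rV[R]_d) : R := \sum_(i < d) u 0 i * v 0 i.
Definition sqnorm (d : nat) (u : 'rV[R]_d) : R := \sum_(i < d) u 0 i ^+ 2.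

Definition lin_mix (d : nat) (psi : S -> A -> S -> 'rV[R]_d) (theta : 'rV[R]_d)
  : kernel := fun s a s' => dotr (psi s a s') theta.

Definition psi_normalized (d : nat) (psi : S -> A -> S -> 'rV[R]_d) : Prop :=
  forall s a (V : S -> R), (forall s', 0 <= V s' <= 1) ->
    sqnorm (\sum_s' V s' *: psi s a s') <= 1.

Definition lin_pref (d : nat) (phi : Traj -> Traj -> 'rV[R]_d) (vt : 'rV[R]_d)
  : prefT := fun t1 t2 => dotr (phi t1 t2) vt.

End PbRL.

(* Main.v *)
Require Import Defs.
From mathcomp Require Import all_boot all_order all_algebra.
From mathcomp Require Import reals.
From mathcomp Require Import ring lra.
Set Implicit Arguments. Unset Strict Implicit. Unset Printing Implicit Defensive.
Import Order.TTheory GRing.Theory Num.Theory.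
Local Open Scope ring_scope.

Section Engine.
Variable R : realType.
Variable E : finType.

Fixpoint ExW (st rho : seq E -> E -> R) (n : nat) (h : seq E) (w : R)
  (F : seq E -> R -> R) : R :=
  match n with
  | 0 => F h w
  | n'.+1 => \sum_e st h e * ExW st rho n' (rcons h e) (w * rho h e) F
  end.

Definition Ex (st : seq E -> E -> R) n h (f : seq E -> R) : R :=
  ExW st (fun _ _ => 1) n h 1 (fun h _ => f h).

Lemma ExW_irr st rho rho' n h w w' (f : seq E -> R) :
  ExW st rho n h w (fun h _ => f h) = ExW st rho' n h w' (fun h _ => f h).
Proof.
elim: n h w w' => [//|n IH] h w w' /=.
by apply: eq_bigr => e _; rewrite (IH _ _ (w' * rho' h e)).
Qed.

Lemma Ex_S st n h f : Ex st n.+1 h f = \sum_e st h e * Ex st n (rcons h e) f.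
Proof. by rewrite /Ex /=; apply: eq_bigr => e _; rewrite mulr1. Qed.

Lemma Ex_0 st h f : Ex st 0 h f = f h.
Proof. by []. Qed.

Lemma ExW_ext st rho n h w F G : (forall h v, F h v = G h v) ->
  ExW st rho n h w F = ExW st rho n h w G.
Proof.
move=> FG; elim: n h w => [|n IH] h w /=; first exact: FG.
by apply: eq_bigr => e _; rewrite IH.
Qed.

Lemma ExW_lin st rho n h w a F G :
  ExW st rho n h w (fun h v => a * F h v + G h v) =
  a * ExW st rho n h w F + ExW st rho n h w G.
Proof.
elim: n h w => [//|n IH] h w /=.
rewrite mulr_sumr -big_split /=; apply: eq_bigr => e _; rewrite IH; ring.
Qed.


Lemma Ex_ext st n h f g : (forall h, f h = g h) -> Ex st n h f = Ex st n h g.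
Proof. by move=> fg; apply: ExW_ext => h' v; exact: fg. Qed.

Lemma Ex_lin st n h a f g :
  Ex st n h (fun h => a * f h + g h) = a * Ex st n h f + Ex st n h g.
Proof. by rewrite /Ex ExW_lin. Qed.

Lemma Ex_sum (I : finType) st n h (F : I -> seq E -> R) :
  Ex st n h (fun h => \sum_i F i h) = \sum_i Ex st n h (F i).
Proof.
elim: n h => [//|n IH] h.
rewrite Ex_S; under eq_bigr do rewrite IH.
under [RHS]eq_bigr do rewrite Ex_S.
rewrite exchange_big /=; apply: eq_bigr => e _; by rewrite mulr_sumr.
Qed.

Lemma Ex_scale st n h a f : Ex st n h (fun h => a * f h) = a * Ex st n h f.
Proof.
elim: n h => [//|n IH] h; rewrite !Ex_S mulr_sumr; apply: eq_bigr => e _.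
by rewrite IH; ring.
Qed.

Lemma Ex_const st n h c : (forall h, \sum_e st h e = 1) -> Ex st n h (fun _ => c) = c.
Proof.
move=> s1; elim: n h => [//|n IH] h; rewrite Ex_S; under eq_bigr do rewrite IH.
by rewrite -mulr_suml s1 mul1r.
Qed.

Lemma Ex_mono st n h f g : (forall h e, 0 <= st h e) -> (forall h, f h <= g h) ->
  Ex st n h f <= Ex st n h g.
Proof.
move=> s0 fg; elim: n h => [|n IH] h; first exact: fg.
by rewrite !Ex_S; apply: ler_sum => e _; apply: ler_wpM2l.
Qed.

Section Hyp.
Variables (st rho : seq E -> E -> R).
Hypothesis st_ge0 : forall h e, 0 <= st h e.
Hypothesis st_sum1 : forall h, \sum_e st h e = 1.

Lemma ExW_const n h w c : ExW st rho n h w (fun _ _ => c) = c.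
Proof.
elim: n h w => [//|n IH] h w /=.
under eq_bigr do rewrite IH.
by rewrite -mulr_suml st_sum1 mul1r.
Qed.

Lemma ExW_mono n h w F G : (forall h v, F h v <= G h v) ->
  ExW st rho n h w F <= ExW st rho n h w G.
Proof.
move=> FG; elim: n h w => [|n IH] h w /=; first exact: FG.
by apply: ler_sum => e _; apply: ler_wpM2l.
Qed.

Lemma ExW_jensen n h w F :
  ExW st rho n h w F ^+ 2 <= ExW st rho n h w (fun h v => F h v ^+ 2).
Proof.
set m := ExW st rho n h w F.
have H0 : 0 <= ExW st rho n h w (fun h v => (F h v - m) ^+ 2).
  rewrite -(ExW_const n h w 0); apply: ExW_mono => h' v; exact: sqr_ge0.
have E0 : ExW st rho n h w (fun h v => (F h v - m) ^+ 2) =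
   ExW st rho n h w (fun h v => (- 2 * m) * F h v + (1 * F h v ^+ 2 + m ^+ 2)).
  by apply: ExW_ext => h' v; ring.
move: H0; rewrite E0 ExW_lin ExW_lin ExW_const -/m => H1; lra.
Qed.

Lemma ExW_chi n h w G : 0 <= G -> (forall h, \sum_e st h e * rho h e ^+ 2 <= G) ->
  ExW st rho n h w (fun _ v => v ^+ 2) <= w ^+ 2 * G ^+ n.
Proof.
move=> G0 HG; elim: n h w => [|n IH] h w /=; first by rewrite expr0 mulr1.
apply: (@le_trans _ _ (\sum_e st h e * ((w * rho h e) ^+ 2 * G ^+ n))).
  by apply: ler_sum => e _; apply: ler_wpM2l.
have -> : \sum_e st h e * ((w * rho h e) ^+ 2 * G ^+ n) =
   (w ^+ 2 * G ^+ n) * \sum_e st h e * rho h e ^+ 2.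
  by rewrite mulr_sumr; apply: eq_bigr => e _; ring.
rewrite (exprSr G n) mulrA.
apply: ler_wpM2l => //.
by apply: mulr_ge0; [exact: sqr_ge0 | exact: exprn_ge0].
Qed.

Variable st' : seq E -> E -> R.
Hypothesis st'E : forall h e, st' h e = st h e * rho h e.
Hypothesis st'_sum1 : forall h, \sum_e st' h e = 1.

Lemma ExW_change n h w f :
  ExW st rho n h w (fun h v => v * f h) = w * Ex st' n h f.
Proof.
rewrite /Ex; elim: n h w => [//|n IH] h w /=.
rewrite mulr_sumr; apply: eq_bigr => e _.
rewrite IH (ExW_irr _ _ (fun _ _ => 1) _ _ _ (1 * 1)) st'E; ring.
Qed.

Lemma Ex_tv n h f G : 0 <= G -> (forall h, \sum_e st h e * rho h e ^+ 2 <= G) ->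
  (forall h, 0 <= f h <= 1) ->
  (Ex st' n h f - Ex st n h f) ^+ 2 <= G ^+ n - 1.
Proof.
move=> G0 HG f01.
have E1 : Ex st' n h f = ExW st rho n h 1 (fun h v => v * f h).
  by rewrite ExW_change mul1r.
have E2 : Ex st n h f = ExW st rho n h 1 (fun h _ => f h).
  by rewrite /Ex (ExW_irr _ _ rho _ _ _ 1).
have E3 : Ex st' n h f - Ex st n h f =
   ExW st rho n h 1 (fun h v => (v - 1) * f h).
  rewrite E1 E2.
  have -> : ExW st rho n h 1 (fun h v => v * f h) =
    ExW st rho n h 1 (fun h v => 1 * ((v - 1) * f h) + f h).
    by apply: ExW_ext => h' v; ring.
  by rewrite ExW_lin; ring.
rewrite E3; apply: (le_trans (ExW_jensen _ _ _ _)).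
apply: (@le_trans _ _ (ExW st rho n h 1 (fun h v => (v - 1) ^+ 2))).
  apply: ExW_mono => h' v; rewrite exprMn.
  have /andP[f0 f1] := f01 h'.
  have : f h' ^+ 2 <= 1 by rewrite expr2; nra.
  have : 0 <= (v - 1) ^+ 2 by exact: sqr_ge0.
  nra.
have -> : ExW st rho n h 1 (fun h v => (v - 1) ^+ 2) =
  ExW st rho n h 1 (fun h v => (-2) * (v * 1) + (1 * v ^+ 2 + 1)).
  by apply: ExW_ext => h' v; ring.
rewrite ExW_lin ExW_lin ExW_const ExW_change.
have -> : Ex st' n h (fun _ => 1) = 1.
  rewrite /Ex. elim: n h {E1 E2 E3} => [//|n IH] h /=.
  under eq_bigr do rewrite mulr1 IH mulr1.
  exact: st'_sum1.
have := ExW_chi n h 1 G0 HG; rewrite expr1n mul1r; lra.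
Qed.

End Hyp.
End Engine.

Section Unroll.
Variable R : realType.
Variables (S A : finType) (H : nat).

Lemma sum_ep (X Y : finType) (F : X * Y * bool -> R) :
  \sum_e F e = \sum_x \sum_y (F (x, y, true) + F (x, y, false)).
Proof.
transitivity (\sum_x \sum_y \sum_o F (x, y, o)).
  by rewrite pair_bigA pair_bigA; apply: eq_bigr => -[[x y] o] _.
by apply: eq_bigr => x _; apply: eq_bigr => y _; rewrite big_bool.
Qed.

Definition stepf (P : kernel R S A) (s1 : S) (T : prefT R S A H) (alg : algo R S A H)
  (h : seq (episode_data S A H)) (e : episode_data S A H) : R :=
  traj_prob P s1 (alg h).1 e.1.1 * traj_prob P s1 (alg h).2 e.1.2 *
  (if e.2 then T e.1.1 e.1.2 else 1 - T e.1.1 e.1.2).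

Definition regterm (P : kernel R S A) (s1 : S) (T : prefT R S A H) (pis : policy R S A)
  (pp : policy R S A * policy R S A) : R :=
  (pref_pol P s1 T pis pp.1 - 1 / 2%:R) + (pref_pol P s1 T pis pp.2 - 1 / 2%:R).

Lemma unroll P s1 T pis alg n h :
  exp_regret_from P s1 T pis alg n h =
  \sum_(k < n) Ex (stepf P s1 T alg) k h (fun h => regterm P s1 T pis (alg h)).
Proof.
elim: n h => [|n IH] h; first by rewrite big_ord0.
rewrite big_ord_recl /= Ex_0.
under [X in _ = _ + X]eq_bigr do rewrite Ex_S.
rewrite exchange_big /=; congr (_ + _).
rewrite [in RHS]exchange_big sum_ep /= [in LHS]exchange_big; apply: eq_bigr => t1 _; apply: eq_bigr => t2 _.
rewrite -!mulr_sumr -!IH /stepf /=; ring.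

Qed.

End Unroll.

Section Tup.
Variable R : realType.

Lemma sum_tupleS (X : finType) n (F : n.+1.-tuple X -> R) :
  \sum_t F t = \sum_x \sum_(t : n.-tuple X) F [tuple of x :: t].
Proof.
rewrite pair_bigA /=.
pose h (p : X * n.-tuple X) : n.+1.-tuple X := [tuple of p.1 :: p.2].
pose hi (t : n.+1.-tuple X) : X * n.-tuple X := (thead t, [tuple of behead t]).
rewrite (reindex h) /=; last first.
  exists hi => [[x t] _|t _]; first by congr (_, _); apply: val_inj.
  by rewrite /h /hi /=; apply: val_inj => /=; rewrite [in RHS](tuple_eta t).
by apply: eq_bigr => -[x t].
Qed.

Lemma sum_tuple0 (X : finType) (F : 0.-tuple X -> R) :
  \sum_t F t = F [tuple].
Proof.
rewrite (eq_bigr (fun _ => F [tuple])); last by move=> t _; rewrite (tuple0 t).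
by rewrite sumr_const card_tuple expn0.
Qed.

Lemma sum_tuple2 (X : finType) (F : 2.-tuple X -> R) :
  \sum_t F t = \sum_x \sum_y F [tuple x; y].
Proof.
rewrite sum_tupleS; apply: eq_bigr => x _; rewrite sum_tupleS.
apply: eq_bigr => y _; rewrite sum_tuple0; congr F; exact: val_inj.
Qed.

Lemma tuple2_eta (X : Type) (t : 2.-tuple X) : t = [tuple tnth t ord0; tnth t ord_max].
Proof.
apply: val_inj => /=; case: t => -[|x [|y [|z s]]] //= _.
Qed.

End Tup.

Definition Act (mP mT : nat) := ({ffun 'I_mP -> bool} * {ffun 'I_mT -> bool})%type.

Section Inst.
Variable R : realType.
Variables mP mT : nat.
Local Notation Act := (Act mP mT).
Local Notation TJ := (Traj bool Act 2).

Definition sg (b : bool) : R := if b then 1 else -1.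

Lemma sg_mul_bound b c : -1 <= sg b * sg c <= 1.
Proof. by case: b; case: c; rewrite /sg /=; lra. Qed.

Lemma sg_mul_wrong b c : sg b * sg c = 1 - 2 * (b != c)%:R.
Proof. by case: b; case: c; rewrite /sg /=; lra. Qed.

Lemma sum_pair (X Y : finType) (F : X * Y -> R) :
  \sum_p F p = \sum_x \sum_y F (x, y).
Proof. by rewrite pair_bigA; apply: eq_bigr => -[x y]. Qed.

Definition DP (th a : Act) : R := \sum_j sg (th.1 j) * sg (a.1 j).
Definition DT (th a : Act) : R := \sum_i sg (th.2 i) * sg (a.2 i).

Lemma DP_bound th a : - mP%:R <= DP th a <= mP%:R.
Proof.
have H1 : DP th a <= \sum_(j < mP) (1 : R).
  by apply: ler_sum => j _; have /andP[] := sg_mul_bound (th.1 j) (a.1 j).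
have H2 : \sum_(j < mP) (-1 : R) <= DP th a.
  by apply: ler_sum => j _; have /andP[] := sg_mul_bound (th.1 j) (a.1 j).
move: H1 H2; rewrite !sumr_const card_ord => H1 H2.
rewrite -mulNrn; apply/andP; split => //.
Qed.

Lemma DT_bound th a : - mT%:R <= DT th a <= mT%:R.
Proof.
have H1 : DT th a <= \sum_(j < mT) (1 : R).
  by apply: ler_sum => j _; have /andP[] := sg_mul_bound (th.2 j) (a.2 j).
have H2 : \sum_(j < mT) (-1 : R) <= DT th a.
  by apply: ler_sum => j _; have /andP[] := sg_mul_bound (th.2 j) (a.2 j).
move: H1 H2; rewrite !sumr_const card_ord => H1 H2.
rewrite -mulNrn; apply/andP; split => //.
Qed.

Lemma lra_aux (x y : R) : 24 * x <= 1 -> y <= x -> - x <= y -> - (1/24) <= y <= 1/24.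
Proof. move=> *; apply/andP; split; lra. Qed.

Variable eta : R.
Hypothesis eta_gt0 : 0 < eta.
Hypothesis etaP : 24 * (eta * mP%:R) <= 1.
Hypothesis etaT : 24 * (eta * mT%:R) <= 1.

Definition Pk (th : Act) (s : bool) (a : Act) (s' : bool) : R :=
  1 / 2 + sg s' * (eta * DP th a).

Definition gT (th : Act) (t : TJ) : R :=
  1 / 8 * ((tnth t ord_max).1)%:R + eta / 8 * DT th (tnth t ord0).2.

Definition Tk (th : Act) (t1 t2 : TJ) : R := 1 / 2 + gT th t1 - gT th t2.

Lemma etaDP th a : - (1/24) <= eta * DP th a <= 1/24.
Proof.
have /andP[h1 h2] := DP_bound th a.
have h3 : eta * DP th a <= eta * mP%:R by apply: ler_wpM2l; [exact: ltW|].
have h4 : eta * (- mP%:R) <= eta * DP th a by apply: ler_wpM2l; [exact: ltW|].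
rewrite mulrN in h4; exact: (lra_aux etaP h3 h4).
Qed.

Lemma etaDT th a : - (1/24) <= eta * DT th a <= 1/24.
Proof.
have /andP[h1 h2] := DT_bound th a.
have h3 : eta * DT th a <= eta * mT%:R by apply: ler_wpM2l; [exact: ltW|].
have h4 : eta * (- mT%:R) <= eta * DT th a by apply: ler_wpM2l; [exact: ltW|].
rewrite mulrN in h4; exact: (lra_aux etaT h3 h4).
Qed.

Lemma Pk_bound th s a s' : 1/4 <= Pk th s a s' <= 3/4.
Proof.
have /andP[h1 h2] := etaDP th a.
by rewrite /Pk; case: s'; rewrite /sg /=; apply/andP; split; lra.
Qed.

Lemma Pk_sum th s a : Pk th s a true + Pk th s a false = 1.
Proof. rewrite /Pk /sg /=; lra. Qed.

Lemma aux_false (x : R) : 1 / 2 + -1 * x = 1 - (1 / 2 + 1 * x).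
Proof. by field. Qed.

Lemma Pk_false th s a : Pk th s a false = 1 - Pk th s a true.
Proof. exact: aux_false. Qed.

Lemma gT_bound th t : - (1/192) <= gT th t <= 1/8 + 1/192.
Proof.
have /andP[h1 h2] := etaDT th (tnth t ord0).2.
rewrite /gT; case: ((tnth t ord_max).1) => /=; apply/andP; split; lra.
Qed.

Lemma Tk_bound th t1 t2 : 1/4 <= Tk th t1 t2 <= 3/4.
Proof.
have /andP[h1 h2] := gT_bound th t1; have /andP[h3 h4] := gT_bound th t2.
rewrite /Tk; apply/andP; split; lra.
Qed.

End Inst.
Arguments DP {R mP mT}.
Arguments DT {R mP mT}.
Arguments sg {R}.

Section Inst2.
Variable R : realType.
Variables mP mT : nat.
Local Notation Act := (Act mP mT).
Local Notation TJ := (Traj bool Act 2).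
Variable eta : R.
Hypothesis eta_gt0 : 0 < eta.

Section Kern.
Variable P : kernel R bool Act.

Lemma tp_tuple (pi : policy R bool Act) s a s' a' :
  traj_prob P true pi [tuple (s, a); (s', a')] =
  (s == true)%:R * P s a s' * pi [::] s a * pi [:: (s, a)] s' a'.
Proof. rewrite /traj_prob /=; ring. Qed.

Lemma sum_traj (pi : policy R bool Act) (F : TJ -> R) :
  \sum_t traj_prob P true pi t * F t =
  \sum_a \sum_s' \sum_a' pi [::] true a * P true a s' * pi [:: (true, a)] s' a' *
     F [tuple (true, a); (s', a')].
Proof.
rewrite sum_tuple2 sum_pair big_bool /=.
rewrite [X in _ + X]big1 ?addr0; last first.
  move=> a _; apply: big1 => -[s' a'] _; rewrite tp_tuple /=; ring.
apply: eq_bigr => a _; rewrite sum_pair; apply: eq_bigr => s' _.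
apply: eq_bigr => a' _; rewrite tp_tuple /=; ring.
Qed.

Lemma sum_traj1 (pi : policy R bool Act) (F : Act -> bool -> R) :
  valid_policy pi ->
  \sum_(t : TJ) traj_prob P true pi t * F (tnth t ord0).2 (tnth t ord_max).1 =
  \sum_a pi [::] true a * \sum_s' P true a s' * F a s'.
Proof.
move=> vp; rewrite sum_traj; apply: eq_bigr => a _; rewrite mulr_sumr.
apply: eq_bigr => s' _ /=.
have [_ h1] := vp [:: (true, a)] s'.
transitivity (pi [::] true a * P true a s' * F a s' * \sum_a' pi [:: (true, a)] s' a').
  by rewrite mulr_sumr; apply: eq_bigr => a' _; ring.
rewrite h1; ring.
Qed.

Lemma traj_mass (pi : policy R bool Act) :
  valid_policy pi -> (forall s a, P s a true + P s a false = 1) ->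
  \sum_(t : TJ) traj_prob P true pi t = 1.
Proof.
move=> vp hP.
have := sum_traj1 (fun _ _ => 1) vp.
under eq_bigr do rewrite mulr1.
move=> ->; transitivity (\sum_a pi [::] true a); last by have [] := vp [::] true.
by apply: eq_bigr => a _; rewrite big_bool /= !mulr1 hP mulr1.
Qed.

End Kern.

Definition get (x : Act) (c : 'I_mP + 'I_mT) : bool :=
  match c with inl j => x.1 j | inr i => x.2 i end.

Definition wr (th a : Act) : R := \sum_c (get th c != get a c)%:R.

Definition hA (th a : Act) : R := 1 / 8 * Pk eta th true a true + eta / 8 * DT th a.

Definition Eg (th : Act) (pi : policy R bool Act) : R := \sum_a pi [::] true a * hA th a.

Definition Wc (th : Act) (c : 'I_mP + 'I_mT) (pp : policy R bool Act * policy R bool Act) : R :=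
  \sum_a (pp.1 [::] true a + pp.2 [::] true a) * (get th c != get a c)%:R.

Definition Lb (th : Act) (pp : policy R bool Act * policy R bool Act) : R :=
  eta / 4 * \sum_c Wc th c pp.

Lemma DP_diff (th a : Act) : (DP th th - DP th a : R) = 2 * \sum_j (th.1 j != a.1 j)%:R.
Proof.
rewrite /DP -sumrB mulr_sumr; apply: eq_bigr => j _.
rewrite !sg_mul_wrong eqxx /=; ring.
Qed.

Lemma DT_diff (th a : Act) : (DT th th - DT th a : R) = 2 * \sum_i (th.2 i != a.2 i)%:R.
Proof.
rewrite /DT -sumrB mulr_sumr; apply: eq_bigr => j _.
rewrite !sg_mul_wrong eqxx /=; ring.
Qed.

Lemma hA_diff (th a : Act) : hA th th - hA th a = eta / 4 * wr th a.
Proof.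
have e1 := DP_diff th a; have e2 := DT_diff th a.
rewrite /wr big_sumType /= /hA /Pk /sg /=.
move: e1 e2; set x := DP th th; set y := DP th a; set z := DT th th; set w := DT th a.
set u := \sum_j _; set v := \sum_i _ => e1 e2.
have -> : u + v = (x - y) / 2 + (z - w) / 2 by rewrite e1 e2; field.
by field.
Qed.

Lemma wr_ge0 (th a : Act) : 0 <= wr th a.
Proof. by apply: sumr_ge0 => c _; rewrite ler0n. Qed.

Definition popt (th : Act) : policy R bool Act := fun _ _ a => (a == th)%:R.

Lemma sum_ind (X : finType) (x0 : X) (F : X -> R) : \sum_x (x == x0)%:R * F x = F x0.
Proof.
rewrite (bigD1 x0) //= eqxx mul1r big1 ?addr0 // => x /negbTE ->; by rewrite mul0r.
Qed.

Lemma popt_valid (th : Act) : valid_policy (popt th).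
Proof.
move=> past s; split=> [a|]; first by rewrite /popt ler0n.
have := sum_ind th (fun _ => 1); under eq_bigr do rewrite mulr1; by [].
Qed.

Lemma Eg_popt (th : Act) : Eg th (popt th) = hA th th.
Proof. exact: sum_ind. Qed.

Section Winner.
Variable th : Act.
Variable P : kernel R bool Act.
Variable T : prefT R bool Act 2.
Hypothesis HP : forall s a s', P s a s' = Pk eta th s a s'.
Hypothesis HT : forall t1 t2, T t1 t2 = Tk eta th t1 t2.

Lemma HPsum s a : P s a true + P s a false = 1.
Proof. by rewrite !HP Pk_sum. Qed.

Lemma Eg_traj pi : valid_policy pi ->
  \sum_(t : TJ) traj_prob P true pi t * gT eta th t = Eg th pi.
Proof.
move=> vp.
have := sum_traj1 P (fun a (s' : bool) => 1 / 8 * s'%:R + eta / 8 * DT th a) vp.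
rewrite /gT => /= ->; rewrite /Eg; apply: eq_bigr => a _; congr (_ * _).
rewrite big_bool /= /hA !HP; have hs := Pk_sum eta th true a.
move: hs; set p := Pk _ _ _ _ true; set q := Pk _ _ _ _ false => hs.
rewrite (_ : q = 1 - p); [ring | lra].
Qed.

Lemma pref_formula pi1 pi2 : valid_policy pi1 -> valid_policy pi2 ->
  pref_pol P true T pi1 pi2 = 1 / 2 + Eg th pi1 - Eg th pi2.
Proof.
move=> v1 v2; rewrite /pref_pol.
transitivity (\sum_(t1 : TJ) traj_prob P true pi1 t1 * (1 / 2 + gT eta th t1 - Eg th pi2)).
  apply: eq_bigr => t1 _.
  transitivity (traj_prob P true pi1 t1 * (1 / 2 + gT eta th t1) *
      \sum_(t2 : TJ) traj_prob P true pi2 t2 -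
    traj_prob P true pi1 t1 * \sum_(t2 : TJ) traj_prob P true pi2 t2 * gT eta th t2).
    rewrite !mulr_sumr -sumrB; apply: eq_bigr => t2 _; rewrite HT /Tk; ring.
  rewrite traj_mass // ?Eg_traj //; last exact: HPsum.
  ring.
transitivity ((1 / 2 - Eg th pi2) * \sum_(t1 : TJ) traj_prob P true pi1 t1 +
   \sum_(t1 : TJ) traj_prob P true pi1 t1 * gT eta th t1).
  rewrite mulr_sumr -big_split; apply: eq_bigr => t1 _ /=; ring.
rewrite traj_mass // ?Eg_traj //; last exact: HPsum.
ring.
Qed.

Lemma popt_winner : is_winner P true T (popt th).
Proof.
split; first exact: popt_valid.
move=> pi0 v0; rewrite pref_formula //; last exact: popt_valid.
rewrite Eg_popt.
suff : Eg th pi0 <= hA th th by lra.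
rewrite /Eg.
have [h0 h1] := v0 [::] true.
apply: (@le_trans _ _ (\sum_a pi0 [::] true a * hA th th)).
  apply: ler_sum => a _; apply: ler_wpM2l => //.
  have := hA_diff th a; have := wr_ge0 th a.
  have : 0 <= eta / 4 by apply: divr_ge0; [exact: (ltW eta_gt0)|].
  move=> ha hb hc. have : 0 <= eta / 4 * wr th a by exact: mulr_ge0.
  lra.
by rewrite -mulr_suml h1 mul1r.
Qed.

Lemma regret_lb pis pi : is_winner P true T pis -> valid_policy pi ->
  \sum_a pi [::] true a * (eta / 4 * wr th a) <= pref_pol P true T pis pi - 1 / 2.
Proof.
move=> [vs ws] vp.
have := ws _ (popt_valid th); rewrite pref_formula //; last exact: popt_valid.
rewrite Eg_popt pref_formula // => hw.
have [_ h1] := vp [::] true.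
have -> : \sum_a pi [::] true a * (eta / 4 * wr th a) = hA th th - Eg th pi.
  rewrite /Eg.
  under eq_bigr do rewrite -hA_diff.
  rewrite (eq_bigr (fun a => hA th th * pi [::] true a - pi [::] true a * hA th a));
    last by move=> a _; ring.
  by rewrite sumrB -mulr_sumr h1 mulr1.
lra.
Qed.

Lemma regterm_lb pis pp : is_winner P true T pis ->
  valid_policy pp.1 -> valid_policy pp.2 ->
  Lb th pp <= regterm P true T pis pp.
Proof.
move=> w v1 v2; rewrite /regterm.
have h1 := regret_lb w v1; have h2 := regret_lb w v2.
suff -> : Lb th pp = \sum_a pp.1 [::] true a * (eta / 4 * wr th a) +
   \sum_a pp.2 [::] true a * (eta / 4 * wr th a) by lra.
rewrite /Lb /Wc /wr -big_split /= [LHS]mulr_sumr; under [LHS]eq_bigr do rewrite mulr_sumr; rewrite [LHS]exchange_big /=.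
apply: eq_bigr => a _; rewrite !mulr_sumr -big_split /=.
apply: eq_bigr => c _; ring.
Qed.

End Winner.
End Inst2.

Section Bern.
Variable R : realType.

Lemma bern_chi (p q d : R) : 1/4 <= p <= 3/4 -> -d <= q - p <= d ->
  q ^+ 2 / p + (1 - q) ^+ 2 / (1 - p) <= 1 + 6 * d ^+ 2.
Proof.
move=> /andP[p1 p2] /andP[d1 d2].
have pn : p != 0 by apply/eqP => e; rewrite e in p1; lra.
have qn : 1 - p != 0 by apply/eqP => e; lra.
have -> : q ^+ 2 / p + (1 - q) ^+ 2 / (1 - p) = 1 + (q - p) ^+ 2 / (p * (1 - p)).
  by field; apply/andP; split.
have pp : 0 < p * (1 - p) by apply: mulr_gt0; lra.
rewrite lerD2l ler_pdivrMr //.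
have h1 : (q - p) ^+ 2 <= d ^+ 2 by rewrite !expr2; nra.
have h2 : 3 / 16 <= p * (1 - p) by nra.
have h3 : 0 <= d ^+ 2 by exact: sqr_ge0.
nra.
Qed.

Lemma pow_bound (g : R) n : 0 <= g -> n%:R * g <= 1 / 2 -> (1 + g) ^+ n <= 1 + 2 * n%:R * g.
Proof.
move=> g0; elim: n => [|n IH] h; first by rewrite expr0 mulr0 mul0r addr0.
have h' : n%:R * g <= 1 / 2.
  apply: le_trans h; apply: ler_wpM2r => //; rewrite ler_nat; exact: leqnSn.
have := IH h'; rewrite exprS -natr1 => IH'.
have : (1 + g) * (1 + g) ^+ n <= (1 + g) * (1 + 2 * n%:R * g).
  by apply: ler_wpM2l => //; lra.
move: h; rewrite -natr1; set x := n%:R => h.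
have : 0 <= x * g by apply: mulr_ge0 => //; rewrite /x ler0n.
nra.
Qed.

Lemma aux_eta (eta u : R) : 0 < eta -> -4 <= u -> u <= 4 ->
  - (2 * eta) <= eta / 8 * u <= 2 * eta.
Proof. move=> *; apply/andP; split; nra. Qed.

End Bern.

Section Flip.
Variable R : realType.
Variables mP mT : nat.
Local Notation Act := (Act mP mT).

Definition flip (th : Act) (c : 'I_mP + 'I_mT) : Act :=
  match c with
  | inl j => ([ffun j' => if j' == j then ~~ th.1 j' else th.1 j'], th.2)
  | inr i => (th.1, [ffun i' => if i' == i then ~~ th.2 i' else th.2 i'])
  end.

Lemma flipK th c : flip (flip th c) c = th.
Proof.
case: c => [j|i]; case: th => [x y] /=; congr (_, _); apply/ffunP => k;
  rewrite !ffunE; case: eqP => //= _; exact: negbK.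
Qed.

Lemma get_flip th c : get (flip th c) c = ~~ get th c.
Proof. by case: c => [j|i] /=; rewrite ffunE eqxx. Qed.

Lemma sg_diff b x : (-2 : R) <= (@sg R (~~ b) - sg b) * sg x <= 2.
Proof. by case: b; case: x; rewrite /sg /=; lra. Qed.

Lemma DP_flip th c a : (-2 : R) <= @DP R _ _ (flip th c) a - DP th a <= 2.
Proof.
case: c => [j|i] /=; last by rewrite /DP /= subrr; lra.
rewrite /DP /= -sumrB (bigD1 j) //= big1 ?addr0 => [|j' hj'].
  by rewrite ffunE eqxx -mulrBl; exact: sg_diff.
by rewrite ffunE (negbTE hj') subrr.
Qed.

Lemma DT_flip th c a : (-2 : R) <= @DT R _ _ (flip th c) a - DT th a <= 2.
Proof.
case: c => [j|i] /=; first by rewrite /DT /= subrr; lra.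
rewrite /DT /= -sumrB (bigD1 i) //= big1 ?addr0 => [|j' hj'].
  by rewrite ffunE eqxx -mulrBl; exact: sg_diff.
by rewrite ffunE (negbTE hj') subrr.
Qed.

Variable eta : R.
Hypothesis eta_gt0 : 0 < eta.

Lemma Pk_flip th c s a s' :
  - (2 * eta) <= Pk eta (flip th c) s a s' - Pk eta th s a s' <= 2 * eta.
Proof.
have /andP[h1 h2] := DP_flip th c a.
rewrite /Pk.
have -> : 1 / 2 + sg s' * (eta * DP (flip th c) a) - (1 / 2 + sg s' * (eta * DP th a)) =
  sg s' * (eta * (DP (flip th c) a - DP th a)) by ring.
move: h1 h2; set x := (DP (flip th c) a - DP th a) => h1 h2.
have e1 : eta * x <= 2 * eta by rewrite mulrC; apply: ler_wpM2r => //; exact: ltW.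
have e2 : - (2 * eta) <= eta * x by rewrite -mulNr [eta * x]mulrC; apply: ler_wpM2r => //; exact: ltW.
by case: s'; rewrite /sg /=; apply/andP; split; lra.
Qed.

Lemma Tk_flip th c t1 t2 :
  - (2 * eta) <= Tk eta (flip th c) t1 t2 - Tk eta th t1 t2 <= 2 * eta.
Proof.
have /andP[h1 h2] := DT_flip th c (tnth t1 ord0).2.
have /andP[h3 h4] := DT_flip th c (tnth t2 ord0).2.
rewrite /Tk /gT.
move: h1 h2 h3 h4.
set x := DT (flip th c) _; set y := DT th _; set z := DT (flip th c) _; set w := DT th _.
move=> h1 h2 h3 h4.
have -> : 1 / 2 + (1 / 8 * ((tnth t1 ord_max).1)%:R + eta / 8 * x) -
    (1 / 8 * ((tnth t2 ord_max).1)%:R + eta / 8 * z) -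
    (1 / 2 + (1 / 8 * ((tnth t1 ord_max).1)%:R + eta / 8 * y) -
     (1 / 8 * ((tnth t2 ord_max).1)%:R + eta / 8 * w)) =
    eta / 8 * ((x - y) - (z - w)) by ring.
have : -4 <= (x - y) - (z - w) <= 4 by apply/andP; split; lra.
move: (x - y - (z - w)) => u /andP[u1 u2]; clear -eta_gt0 u1 u2.
exact: aux_eta.
Qed.

End Flip.

Section Step.
Variable R : realType.
Variables mP mT : nat.
Local Notation Act := (Act mP mT).
Local Notation TJ := (Traj bool Act 2).
Variable eta : R.
Hypothesis eta_gt0 : 0 < eta.
Hypothesis etaP : 24 * (eta * mP%:R) <= 1.
Hypothesis etaT : 24 * (eta * mT%:R) <= 1.

Section Kpos.
Variable th : Act.
Variable P : kernel R bool Act.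
Variable T : prefT R bool Act 2.
Hypothesis HP : forall s a s', P s a s' = Pk eta th s a s'.
Hypothesis HT : forall t1 t2, T t1 t2 = Tk eta th t1 t2.

Lemma P_bnd s a s' : 1/4 <= P s a s' <= 3/4.
Proof. rewrite HP; exact: Pk_bound. Qed.

Lemma T_bnd t1 t2 : 1/4 <= T t1 t2 <= 3/4.
Proof. rewrite HT; exact: Tk_bound. Qed.

Lemma tp_ge0 (pi : policy R bool Act) (t : TJ) : valid_policy pi ->
  0 <= traj_prob P true pi t.
Proof.
move=> vp; rewrite (tuple2_eta t).
case: (tnth t ord0) => s a; case: (tnth t ord_max) => s' a'.
rewrite tp_tuple; have [h0 _] := vp [::] s; have [h1 _] := vp [:: (s, a)] s'.
have /andP[p0 _] := P_bnd s a s'.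
repeat apply: mulr_ge0 => //; try lra; exact: ler0n.
Qed.

Lemma step_ge0 (alg : algo R bool Act 2) h e :
  (forall h, valid_policy (alg h).1 /\ valid_policy (alg h).2) ->
  0 <= stepf P true T alg h e.
Proof.
move=> va; have [v1 v2] := va h; rewrite /stepf.
have /andP[q0 q1] := T_bnd e.1.1 e.1.2.
apply: mulr_ge0; first by apply: mulr_ge0; exact: tp_ge0.
by case: e.2; lra.
Qed.

Lemma step_sum1 (alg : algo R bool Act 2) h :
  (forall h, valid_policy (alg h).1 /\ valid_policy (alg h).2) ->
  \sum_e stepf P true T alg h e = 1.
Proof.
move=> va; have [v1 v2] := va h.
have hs : forall s a, P s a true + P s a false = 1 by move=> s a; rewrite !HP Pk_sum.
rewrite sum_ep /stepf /=.
transitivity (\sum_(t1 : TJ) \sum_(t2 : TJ) traj_prob P true (alg h).1 t1 *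
   traj_prob P true (alg h).2 t2).
  by apply: eq_bigr => t1 _; apply: eq_bigr => t2 _; ring.
rewrite -(traj_mass v1 hs); apply: eq_bigr => t1 _.
by rewrite -mulr_sumr traj_mass // mulr1.
Qed.

End Kpos.

Variable alg : algo R bool Act 2.
Hypothesis valg : forall h, valid_policy (alg h).1 /\ valid_policy (alg h).2.
Variables (th : Act) (c : 'I_mP + 'I_mT).
Variables (P P' : kernel R bool Act) (T T' : prefT R bool Act 2).
Hypothesis HP : forall s a s', P s a s' = Pk eta th s a s'.
Hypothesis HT : forall t1 t2, T t1 t2 = Tk eta th t1 t2.
Hypothesis HP' : forall s a s', P' s a s' = Pk eta (flip th c) s a s'.
Hypothesis HT' : forall t1 t2, T' t1 t2 = Tk eta (flip th c) t1 t2.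

Definition kap (t : TJ) : R :=
  P' true (tnth t ord0).2 (tnth t ord_max).1 / P true (tnth t ord0).2 (tnth t ord_max).1.

Definition obs (T0 : prefT R bool Act 2) (t1 t2 : TJ) (o : bool) : R :=
  if o then T0 t1 t2 else 1 - T0 t1 t2.

Definition rho (h : seq (episode_data bool Act 2)) (e : episode_data bool Act 2) : R :=
  kap e.1.1 * kap e.1.2 * (obs T' e.1.1 e.1.2 e.2 / obs T e.1.1 e.1.2 e.2).

Lemma tp_kap (pi : policy R bool Act) (t : TJ) :
  traj_prob P' true pi t = traj_prob P true pi t * kap t.
Proof.
have := tuple2_eta t; move: (tnth t ord0) (tnth t ord_max) => [s a] [s' a'] ->.
rewrite !tp_tuple /kap /=.
have /andP[p0 _] := P_bnd HP true a s'.
have pn : P true a s' != 0 by apply/eqP => e; rewrite e in p0; lra.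
case: s => /=; last by rewrite !mul0r.
by field.
Qed.

Lemma obs_ne0 (T0 : prefT R bool Act 2) t1 t2 o :
  (forall t1 t2, 1/4 <= T0 t1 t2 <= 3/4) -> obs T0 t1 t2 o != 0.
Proof.
move=> hb; have /andP[h1 h2] := hb t1 t2.
by apply/eqP; case: o => /= e; lra.
Qed.

Lemma step_rho h e : stepf P' true T' alg h e = stepf P true T alg h e * rho h e.
Proof.
rewrite /stepf /rho !tp_kap.
have n1 := obs_ne0 e.1.1 e.1.2 e.2 (T_bnd HT).
have -> : (if e.2 then T' e.1.1 e.1.2 else 1 - T' e.1.1 e.1.2) = obs T' e.1.1 e.1.2 e.2 by [].
have -> : (if e.2 then T e.1.1 e.1.2 else 1 - T e.1.1 e.1.2) = obs T e.1.1 e.1.2 e.2 by [].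
by field.
Qed.

Definition gam : R := 24 * eta ^+ 2.

Lemma sqdiv (x y : R) : x != 0 -> x * (y / x) ^+ 2 = y ^+ 2 / x.
Proof. by move=> xn; field. Qed.

Lemma kap_chi (pi : policy R bool Act) : valid_policy pi ->
  \sum_(t : TJ) traj_prob P true pi t * kap t ^+ 2 <= 1 + gam.
Proof.
move=> vp.
have := sum_traj1 P (fun a s' => (P' true a s' / P true a s') ^+ 2) vp.
rewrite /kap => /= ->.
have [h0 h1] := vp [::] true.
apply: (@le_trans _ _ (\sum_a pi [::] true a * (1 + gam))); last first.
  by rewrite -mulr_suml h1 mul1r.
apply: ler_sum => a _; apply: ler_wpM2l => //.
rewrite big_bool /=.
have /andP[p0 p1] := P_bnd HP true a true.
have /andP[q0 q1] := P_bnd HP true a false.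
rewrite !sqdiv; try (apply/eqP => e; lra).
have hs : P true a false = 1 - P true a true by rewrite !HP Pk_false.
have hs' : P' true a false = 1 - P' true a true by rewrite !HP' Pk_false.
rewrite hs hs'.
have := Pk_flip eta_gt0 th c true a true; rewrite -HP -HP' => hd.
have := bern_chi (P_bnd HP true a true) hd.
move=> hb; apply: (le_trans hb); rewrite /gam exprMn -[(2 : R) ^+ 2]/(2 * 2); set u := eta ^+ 2; lra.
Qed.

Lemma obs_chi t1 t2 :
  \sum_o obs T t1 t2 o * (obs T' t1 t2 o / obs T t1 t2 o) ^+ 2 <= 1 + gam.
Proof.
rewrite big_bool /= !sqdiv; try (apply: obs_ne0; exact: (T_bnd HT)).
rewrite /obs.
have := Tk_flip eta_gt0 th c t1 t2; rewrite -HT -HT' => hd.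
have := bern_chi (T_bnd HT t1 t2) hd.
move=> hb; apply: (le_trans hb); rewrite /gam exprMn -[(2 : R) ^+ 2]/(2 * 2); set u := eta ^+ 2; lra.
all: have /andP[u1 u2] := T_bnd HT t1 t2; apply/eqP => e; lra.
Qed.

Lemma step_chi h :
  \sum_e stepf P true T alg h e * rho h e ^+ 2 <= (1 + gam) ^+ 3.
Proof.
have [v1 v2] := valg h.
have g0 : 0 <= gam by rewrite /gam; apply: mulr_ge0 => //; exact: sqr_ge0.
pose A1 (t : TJ) := traj_prob P true (alg h).1 t * kap t ^+ 2.
pose A2 (t : TJ) := traj_prob P true (alg h).2 t * kap t ^+ 2.
rewrite sum_ep.
apply: (@le_trans _ _ (\sum_(t1 : TJ) \sum_(t2 : TJ) A1 t1 * A2 t2 * (1 + gam))).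
  apply: ler_sum => t1 _; apply: ler_sum => t2 _.
  have -> : stepf P true T alg h (t1, t2, true) * rho h (t1, t2, true) ^+ 2 +
     stepf P true T alg h (t1, t2, false) * rho h (t1, t2, false) ^+ 2 =
     A1 t1 * A2 t2 * \sum_o obs T t1 t2 o * (obs T' t1 t2 o / obs T t1 t2 o) ^+ 2.
    by rewrite big_bool /rho /stepf /obs /A1 /A2 /=; ring.
  apply: ler_wpM2l; last exact: obs_chi.
  apply: mulr_ge0; apply: mulr_ge0; try exact: sqr_ge0; exact: (tp_ge0 HP).
have -> : \sum_(t1 : TJ) \sum_(t2 : TJ) A1 t1 * A2 t2 * (1 + gam) =
   (\sum_(t1 : TJ) A1 t1) * (\sum_(t2 : TJ) A2 t2) * (1 + gam).
  by rewrite big_distrlr mulr_suml; apply: eq_bigr => t1 _; rewrite mulr_suml.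
have s1 := kap_chi v1; have s2 := kap_chi v2.
have a1 : 0 <= \sum_(t1 : TJ) A1 t1.
  by apply: sumr_ge0 => t _; apply: mulr_ge0; [exact: (tp_ge0 HP)|exact: sqr_ge0].
have a2 : 0 <= \sum_(t1 : TJ) A2 t1.
  by apply: sumr_ge0 => t _; apply: mulr_ge0; [exact: (tp_ge0 HP)|exact: sqr_ge0].
rewrite !exprS expr0 mulr1 mulrA.
apply: ler_wpM2r; first lra.
by apply: ler_pM.
Qed.

End Step.

Section Aux.
Variable R : realType.
Lemma aux_sq (D : R) : D ^+ 2 <= 1 / 4 -> D <= 1 / 2.
Proof. move=> h; rewrite expr2 in h; nra. Qed.
Lemma aux_pair (x y D : R) : D = y - x -> D ^+ 2 <= 1 / 4 -> 1 <= 2 * x + (-2 * y + 2).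
Proof. move=> -> /aux_sq; lra. Qed.
Lemma aux_G (g : R) k : 0 <= g -> 24 * (k%:R * g) <= 1 ->
  ((1 + g) ^+ 3) ^+ k - 1 <= 1 / 4.
Proof.
move=> g0 hk; rewrite -exprM.
have h1 : (3 * k)%:R * g <= 1 / 2 by rewrite natrM; lra.
have := pow_bound g0 h1; rewrite natrM; lra.
Qed.
End Aux.

Section Pair.
Variable R : realType.
Variables mP mT : nat.
Local Notation Act := (Act mP mT).
Local Notation TJ := (Traj bool Act 2).
Variable eta : R.
Hypothesis eta_gt0 : 0 < eta.
Hypothesis etaP : 24 * (eta * mP%:R) <= 1.
Hypothesis etaT : 24 * (eta * mT%:R) <= 1.
Variable alg : algo R bool Act 2.
Hypothesis valg : forall h, valid_policy (alg h).1 /\ valid_policy (alg h).2.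
Variables (P_ : Act -> kernel R bool Act) (T_ : Act -> prefT R bool Act 2).
Hypothesis HP_ : forall th s a s', P_ th s a s' = Pk eta th s a s'.
Hypothesis HT_ : forall th t1 t2, T_ th t1 t2 = Tk eta th t1 t2.

Definition stf (th : Act) := stepf (P_ th) true (T_ th) alg.
Definition Wf (th : Act) c := fun h => Wc th c (alg h).

Lemma Wc_bnd th c (pp : policy R bool Act * policy R bool Act) :
  valid_policy pp.1 -> valid_policy pp.2 -> 0 <= Wc th c pp <= 2.
Proof.
move=> v1 v2; have [a1 s1] := v1 [::] true; have [a2 s2] := v2 [::] true.
have b0 : forall a, 0 <= pp.1 [::] true a + pp.2 [::] true a.
  by move=> a; apply: addr_ge0.
apply/andP; split.
  by apply: sumr_ge0 => a _; apply: mulr_ge0 => //; exact: ler0n.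
apply: (@le_trans _ _ (\sum_a (pp.1 [::] true a + pp.2 [::] true a))).
  apply: ler_sum => a _; rewrite -[X in _ <= X]mulr1; apply: ler_wpM2l => //.
  by case: (_ != _).
by rewrite big_split /= s1 s2; lra.
Qed.

Lemma Wc_flip th c (pp : policy R bool Act * policy R bool Act) :
  valid_policy pp.1 -> valid_policy pp.2 -> Wc (flip th c) c pp = 2 - Wc th c pp.
Proof.
move=> v1 v2; have [a1 s1] := v1 [::] true; have [a2 s2] := v2 [::] true.
rewrite /Wc get_flip.
have -> : 2 = \sum_a (pp.1 [::] true a + pp.2 [::] true a) by rewrite big_split /= s1 s2.
rewrite -sumrB; apply: eq_bigr => a _.
by case: (get th c); case: (get a c) => /=; ring.
Qed.

Lemma pair_k th c k : 24 * (k%:R * gam eta) <= 1 ->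
  1 <= Ex (stf th) k [::] (Wf th c) + Ex (stf (flip th c)) k [::] (Wf (flip th c) c).
Proof.
move=> hk.
pose f := fun h => Wf th c h / 2.
have g0 : 0 <= gam eta by rewrite /gam; apply: mulr_ge0 => //; exact: sqr_ge0.
have G0 : 0 <= (1 + gam eta) ^+ 3 by apply: exprn_ge0; lra.
have f01 : forall h, 0 <= f h <= 1.
  move=> h; have [v1 v2] := valg h; have /andP[w0 w1] := Wc_bnd th c v1 v2.
  by rewrite /f /Wf; apply/andP; split; lra.
have tv := @Ex_tv _ _ (stf th) (rho (P_ th) (P_ (flip th c)) (T_ th) (T_ (flip th c)))
  (fun h e => step_ge0 eta_gt0 etaP etaT (HP_ th) (HT_ th) h e valg)
  (fun h => step_sum1 (T_ th) (HP_ th) h valg)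
  (stf (flip th c))
  (step_rho eta_gt0 etaP etaT alg (P_ (flip th c)) (T_ (flip th c)) (HP_ th) (HT_ th))
  (fun h => step_sum1 (T_ (flip th c)) (HP_ (flip th c)) h valg)
  k [::] f _ G0
  (step_chi eta_gt0 etaP etaT valg (HP_ th) (HT_ th) (HP_ (flip th c)) (HT_ (flip th c)))
  f01.
have e1 : Ex (stf th) k [::] (Wf th c) = 2 * Ex (stf th) k [::] f.
  rewrite -Ex_scale; apply: Ex_ext => h; rewrite /f; move: (Wf th c h) => w; by field.
have e2 : Ex (stf (flip th c)) k [::] (Wf (flip th c) c) =
    -2 * Ex (stf (flip th c)) k [::] f + 2.
  transitivity (Ex (stf (flip th c)) k [::] (fun h => -2 * f h + 2)).
    apply: Ex_ext => h0; have [v1 v2] := valg h0; rewrite /f /Wf Wc_flip //.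
    move: (Wc th c (alg h0)) => w; by field.
  by rewrite Ex_lin (@Ex_const R _ (stf (flip th c)) k [::] 2 (fun h => step_sum1 (T_ (flip th c)) (HP_ (flip th c)) h valg)).
rewrite e1 e2.
apply: (aux_pair (D := Ex (stf (flip th c)) k [::] f - Ex (stf th) k [::] f)) => //.
apply: (le_trans tv); exact: aux_G.
Qed.

End Pair.

Section Assouad.
Variable R : realType.
Variables mP mT : nat.
Local Notation Act := (Act mP mT).
Local Notation TJ := (Traj bool Act 2).
Variable eta : R.
Hypothesis eta_gt0 : 0 < eta.
Hypothesis etaP : 24 * (eta * mP%:R) <= 1.
Hypothesis etaT : 24 * (eta * mT%:R) <= 1.
Variables (P_ : Act -> kernel R bool Act) (T_ : Act -> prefT R bool Act 2).
Hypothesis HP_ : forall th s a s', P_ th s a s' = Pk eta th s a s'.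
Hypothesis HT_ : forall th t1 t2, T_ th t1 t2 = Tk eta th t1 t2.

Lemma assouad_k (alg : algo R bool Act 2) k :
  (forall h, valid_policy (alg h).1 /\ valid_policy (alg h).2) ->
  24 * (k%:R * gam eta) <= 1 ->
  eta / 4 * ((mP + mT)%:R * (#|{: Act}|%:R / 2)) <=
  \sum_th Ex (stf alg P_ T_ th) k [::] (fun h => Lb eta th (alg h)).
Proof.
move=> valg hk.
have e1 : forall th, Ex (stf alg P_ T_ th) k [::] (fun h => Lb eta th (alg h)) =
   eta / 4 * \sum_c Ex (stf alg P_ T_ th) k [::] (Wf alg th c).
  move=> th; rewrite -Ex_sum -Ex_scale; apply: Ex_ext => h; by [].
under eq_bigr do rewrite e1.
rewrite -mulr_sumr; apply: ler_wpM2l; first by apply: divr_ge0 => //; exact: ltW.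
rewrite exchange_big /=.
have -> : (mP + mT)%:R * (#|{: Act}|%:R / 2) =
   \sum_(c : 'I_mP + 'I_mT) (#|{: Act}|%:R / 2 : R).
  by rewrite sumr_const card_sum !card_ord mulr_natl.
apply: ler_sum => c _.
set X := fun th => Ex (stf alg P_ T_ th) k [::] (Wf alg th c).
have hflip : injective (fun th : Act => flip th c).
  by apply: (@can_inj _ _ _ (fun th : Act => flip th c)) => th; exact: flipK.
have e2 : \sum_th X th = \sum_th X (flip th c) by rewrite (reindex_inj hflip).
have : \sum_(th : Act) (1 : R) <= \sum_th (X th + X (flip th c)).
  by apply: ler_sum => th _; apply: (pair_k eta_gt0 etaP etaT valg HP_ HT_).
rewrite big_split /= -e2 sumr_const.
rewrite cardE /=. set n := size _. move=> h.
rewrite -[X in _ <= X]/(\sum_th X th).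
have : (n%:R : R) / 2 = n%:R * (1 / 2) by rewrite mulrA mulr1.
move: h; rewrite -[(1 : R) *+ n]mulr_natr mul1r; set s := \sum_th X th; set y := (n%:R : R).
move=> h ->; lra.
Qed.

End Assouad.

Section Repr.
Variable R : realType.
Variables mP mT : nat.
Local Notation Act := (Act mP mT).
Local Notation TJ := (Traj bool Act 2).
Variable eta : R.
Hypothesis mP0 : (0 < mP)%N.
Hypothesis mT0 : (0 < mT)%N.

Definition psiV (s : bool) (a : Act) (s' : bool) : 'rV[R]_mP.+1 :=
  \row_(i < mP.+1) match unlift ord0 i with
                   | None => 1 / 4
                   | Some j => sg s' * (eta * mP%:R) * sg (a.1 j) end.

Definition thV (th : Act) : 'rV[R]_mP.+1 :=
  \row_(i < mP.+1) match unlift ord0 i with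
                   | None => 2
                   | Some j => sg (th.1 j) / mP%:R end.

Definition phiV (t1 t2 : TJ) : 'rV[R]_mT.+1 :=
  \row_(i < mT.+1) match unlift ord0 i with
     | None => 1 / 2 + 1 / 8 * (((tnth t1 ord_max).1)%:R - ((tnth t2 ord_max).1)%:R)
     | Some j => eta / 8 * mT%:R * (sg ((tnth t1 ord0).2.2 j) - sg ((tnth t2 ord0).2.2 j))
     end.

Definition vtV (th : Act) : 'rV[R]_mT.+1 :=
  \row_(i < mT.+1) match unlift ord0 i with
                   | None => 1
                   | Some j => sg (th.2 j) / mT%:R end.

Lemma sum_unlift n (F : option 'I_n -> R) :
  \sum_(i < n.+1) F (unlift ord0 i) = F None + \sum_(j < n) F (Some j).
Proof. by rewrite big_ord_recl unlift_none; congr (_ + _); apply: eq_bigr => j _; rewrite liftK. Qed.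

Lemma lin_mix_eq th s a s' : lin_mix psiV (thV th) s a s' = Pk eta th s a s'.
Proof.
rewrite /lin_mix /dotr.
pose F := fun o => match o with
   | None => 1 / 4 * 2
   | Some j => sg s' * (eta * mP%:R) * sg (a.1 j) * (sg (th.1 j) / mP%:R) end.
rewrite (eq_bigr (fun i => F (unlift ord0 i)));
  last by move=> i _; rewrite !mxE /F; case: (unlift ord0 i).
rewrite sum_unlift /F /Pk /DP mulr_sumr mulr_sumr.
have mPn : (mP%:R : R) != 0 by rewrite pnatr_eq0 -lt0n.
congr (_ + _); first by field.
apply: eq_bigr => j _.
move: (sg s') (sg (a.1 j)) (sg (th.1 j)) => x y z; by field.
Qed.

Lemma lin_pref_eq th t1 t2 : lin_pref phiV (vtV th) t1 t2 = Tk eta th t1 t2.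
Proof.
rewrite /lin_pref /dotr.
pose F := fun o => match o with
   | None => (1 / 2 + 1 / 8 * (((tnth t1 ord_max).1)%:R - ((tnth t2 ord_max).1)%:R)) * 1
   | Some j => eta / 8 * mT%:R * (sg ((tnth t1 ord0).2.2 j) - sg ((tnth t2 ord0).2.2 j)) *
        (sg (th.2 j) / mT%:R) end.
rewrite (eq_bigr (fun i => F (unlift ord0 i)));
  last by move=> i _; rewrite !mxE /F; case: (unlift ord0 i).
rewrite sum_unlift /F /Tk /gT /DT.
have mTn : (mT%:R : R) != 0 by rewrite pnatr_eq0 -lt0n.
have -> : \sum_(j < mT) eta / 8 * mT%:R * (sg ((tnth t1 ord0).2.2 j) - sg ((tnth t2 ord0).2.2 j)) *
        (sg (th.2 j) / mT%:R) =
  eta / 8 * \sum_(j < mT) sg (th.2 j) * sg ((tnth t1 ord0).2.2 j) -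
  eta / 8 * \sum_(j < mT) sg (th.2 j) * sg ((tnth t2 ord0).2.2 j).
  rewrite !mulr_sumr -sumrB; apply: eq_bigr => j _.
  move: (sg (th.2 j)) (sg ((tnth t1 ord0).2.2 j)) (sg ((tnth t2 ord0).2.2 j)) => x y z.
  by field.
move: (\sum_(j < mT) _) (\sum_(j < mT) _) => u v.
move: (((tnth t1 ord_max).1)%:R) (((tnth t2 ord_max).1)%:R) => p q.
by field.
Qed.


Lemma sg_sq (b : bool) : (sg b : R) ^+ 2 = 1.
Proof. by case: b; rewrite /sg expr2 /=; [rewrite mulr1 | rewrite mulrNN mulr1]. Qed.

Lemma inv_bound (x : R) : 1 <= x -> 1 / x ^+ 2 * x <= 1.
Proof.
move=> x1; have xn : x != 0 by apply/eqP => e; rewrite e in x1; lra.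
have -> : 1 / x ^+ 2 * x = 1 / x by field.
rewrite ler_pdivrMr; lra.
Qed.

Lemma sqnorm_th th : sqnorm (thV th) <= 3 ^+ 2.
Proof.
rewrite /sqnorm.
pose G := fun o : option 'I_mP => (match o with None => (2 : R) | Some j => sg (th.1 j) / mP%:R end) ^+ 2.
rewrite (eq_bigr (fun i => G (unlift ord0 i))); last by move=> i _; rewrite !mxE /G.
rewrite sum_unlift /G.
rewrite (eq_bigr (fun _ => 1 / mP%:R ^+ 2)); last first.
  move=> j _; rewrite expr_div_n sg_sq //.
rewrite sumr_const card_ord -[(1 / _ ^+ 2) *+ _]mulr_natr.
have h1 : 1 <= (mP%:R : R) by rewrite ler1n.
have := inv_bound h1.
move: (1 / mP%:R ^+ 2 * mP%:R) => w hw.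
rewrite !expr2; lra.
Qed.

Lemma sqnorm_vt th : sqnorm (vtV th) <= 3 ^+ 2.
Proof.
rewrite /sqnorm.
pose G := fun o : option 'I_mT => (match o with None => (1 : R) | Some j => sg (th.2 j) / mT%:R end) ^+ 2.
rewrite (eq_bigr (fun i => G (unlift ord0 i))); last by move=> i _; rewrite !mxE /G.
rewrite sum_unlift /G.
rewrite (eq_bigr (fun _ => 1 / mT%:R ^+ 2)); last first.
  move=> j _; rewrite expr_div_n sg_sq //.
rewrite sumr_const card_ord -[(1 / _ ^+ 2) *+ _]mulr_natr.
have h1 : 1 <= (mT%:R : R) by rewrite ler1n.
have := inv_bound h1.
move: (1 / mT%:R ^+ 2 * mT%:R) => w hw.
rewrite !expr2; lra.
Qed.

Lemma aux_psi0 (x y : R) : 0 <= x <= 1 -> 0 <= y <= 1 -> ((x + y) / 4) ^+ 2 <= 1 / 4.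
Proof. move=> /andP[? ?] /andP[? ?]; rewrite expr2; nra. Qed.

Lemma aux_psi1 (x y e : R) : 0 <= x <= 1 -> 0 <= y <= 1 -> ((x - y) * e) ^+ 2 <= e ^+ 2.
Proof.
move=> /andP[? ?] /andP[? ?]; rewrite exprMn -[X in _ <= X]mul1r.
apply: ler_wpM2r; first exact: sqr_ge0.
rewrite expr2; nra.
Qed.

Lemma psi_norm : mP%:R * (eta * mP%:R) ^+ 2 <= 1 / 2 -> psi_normalized psiV.
Proof.
move=> hb s a V hV.
have h0 := hV true; have h1 := hV false.
rewrite /sqnorm.
pose G := fun o : option 'I_mP => (match o with
   | None => (V true + V false) / 4
   | Some j => (V true - V false) * (eta * mP%:R) * sg (a.1 j) end) ^+ 2.
rewrite (eq_bigr (fun i => G (unlift ord0 i))); last first.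
  move=> i _; rewrite summxE big_bool !mxE /G /=.
  case: (unlift ord0 i) => [j|] /=; congr (_ ^+ 2).
    move: (V true) (V false) (sg (a.1 j)) => x y z; ring.
  move: (V true) (V false) => x y; by field.
rewrite sum_unlift /G.
rewrite (eq_bigr (fun j => ((V true - V false) * (eta * mP%:R)) ^+ 2)); last first.
  by move=> j _; rewrite exprMn sg_sq mulr1.
have e0 := aux_psi0 h0 h1.
have e1 : \sum_(j < mP) ((V true - V false) * (eta * mP%:R)) ^+ 2 <= mP%:R * (eta * mP%:R) ^+ 2.
  apply: (@le_trans _ _ (\sum_(j < mP) (eta * mP%:R) ^+ 2)).
    by apply: ler_sum => j _; exact: aux_psi1.
  by rewrite sumr_const card_ord mulr_natl.
move: e0 e1 hb; move: (\sum_(j < mP) _) => u.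
move: ((V true + V false) / 4) => v; move: (mP%:R * (eta * mP%:R) ^+ 2) => w.
rewrite expr2; lra.
Qed.

End Repr.
Arguments thV {R mP mT}.
Arguments vtV {R mP mT}.

Section Arith.
Variable R : realType.

Lemma A1 (x s : R) : 1 <= x -> 0 < s -> x ^+ 3 <= s ^+ 2 -> 24 * (1 / (24 * s) * x) <= 1.
Proof.
move=> x1 s0 h.
have xs : x <= s.
  have : x ^+ 2 <= x ^+ 3 by rewrite [x ^+ 3]exprS -[X in X <= _]mul1r; apply: ler_wpM2r => //; [exact: sqr_ge0].
  move=> h2; have h3 : x ^+ 2 <= s ^+ 2 by exact: le_trans h.
  rewrite !expr2 in h3; nra.
have sn : s != 0 by apply/eqP => e; rewrite e in s0; lra.
have -> : 24 * (1 / (24 * s) * x) = x / s by field.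
by rewrite ler_pdivrMr // mul1r.
Qed.

Lemma A2 (x s : R) : 0 < s -> x ^+ 3 <= s ^+ 2 -> x * (1 / (24 * s) * x) ^+ 2 <= 1 / 2.
Proof.
move=> s0 h.
have sn : s != 0 by apply/eqP => e; rewrite e in s0; lra.
have -> : x * (1 / (24 * s) * x) ^+ 2 = x ^+ 3 / (576 * s ^+ 2) by field.
have s2 : 0 < 576 * s ^+ 2 by apply: mulr_gt0 => //; exact: exprn_gt0.
rewrite ler_pdivrMr //; rewrite expr2 in h s2 *; nra.
Qed.

Lemma A3 (k s : R) : 0 < s -> 0 <= k -> k <= s ^+ 2 ->
  24 * (k * (24 * (1 / (24 * s)) ^+ 2)) <= 1.
Proof.
move=> s0 k0 h.
have sn : s != 0 by apply/eqP => e; rewrite e in s0; lra.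
have -> : 24 * (k * (24 * (1 / (24 * s)) ^+ 2)) = k / s ^+ 2 by field.
have s2 : 0 < s ^+ 2 by exact: exprn_gt0.
by rewrite ler_pdivrMr // mul1r.
Qed.

Lemma A5 (a b s : R) : 1 <= a -> 1 <= b -> 0 < s ->
  1 / 384 * ((a + 1) * s + (b + 1) * s) <=
  s ^+ 2 * (1 / (24 * s) / 4 * ((a + b) * (1 / 2))).
Proof.
move=> a1 b1 s0.
have sn : s != 0 by apply/eqP => e; rewrite e in s0; lra.
have -> : s ^+ 2 * (1 / (24 * s) / 4 * ((a + b) * (1 / 2))) = s * (a + b) / 192 by field.
nra.
Qed.

Lemma exists_ge (I : finType) (i0 : I) (V : I -> R) (b : R) :
  #|{: I}|%:R * b <= \sum_i V i -> exists i, b <= V i.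
Proof.
move=> h; case: (boolP [exists i, b <= V i]) => [/existsP[i hi] | /existsPn hn].
  by exists i.
have : \sum_i V i < \sum_(i : I) b.
  apply: ltr_sum; first by apply/hasP; exists i0 => //; exact: mem_index_enum.
  by move=> i _; rewrite ltNge; exact: hn.
rewrite sumr_const -mulr_natl; lra.
Qed.

End Arith.

Theorem corollary4p6 (R : realType) :
  exists (c B : R) (d0 : nat) (K0 : nat -> nat -> nat),
  0 < c /\ 0 < B /\
  forall (dP dT K : nat), (d0 <= dP)%N -> (d0 <= dT)%N -> (K0 dP dT <= K)%N ->
  exists (S A : finType) (H : nat) (s1 : S)
         (psi : S -> A -> S -> 'rV[R]_dP)
         (phi : Traj S A H -> Traj S A H -> 'rV[R]_dT),
    psi_normalized psi /\
    forall (U : finType) (mu : U -> R) (alg : U -> algo R S A H),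
      (forall u, 0 <= mu u) -> \sum_u mu u = 1 ->
      (forall u hist, valid_policy (alg u hist).1 /\ valid_policy (alg u hist).2) ->
      exists (theta : 'rV[R]_dP) (vt : 'rV[R]_dT),
        (sqnorm theta <= B ^+ 2 /\ sqnorm vt <= B ^+ 2) /\ [/\
            valid_kernel (lin_mix psi theta),
            valid_pref (lin_pref phi vt),
            (exists pis, is_winner (lin_mix psi theta) s1 (lin_pref phi vt) pis) &
            forall pis, is_winner (lin_mix psi theta) s1 (lin_pref phi vt) pis ->
              c * (dP%:R * Num.sqrt K%:R + dT%:R * Num.sqrt K%:R)
                <= exp_regret mu alg (lin_mix psi theta) s1 (lin_pref phi vt) pis K].
Proof.
exists (1 / 384), 3, 2%N, (fun dP dT => ((dP + dT) ^ 3)%N).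
split; first lra. split; first lra.
move=> [|mP] [|mT] K // hP hT hK.
have mP0 : (0 < mP)%N by [].
have mT0 : (0 < mT)%N by [].
have hKP : (mP ^ 3 <= K)%N.
  apply: leq_trans hK; rewrite leq_exp2r //; apply: leq_trans (leq_addr _ _); exact: leqnSn.
have hKT : (mT ^ 3 <= K)%N.
  apply: leq_trans hK; rewrite leq_exp2r //; apply: leq_trans (leq_addl _ _); exact: leqnSn.
have K0 : (0 < K)%N by apply: leq_trans hKP; rewrite expn_gt0 mP0.
set s := Num.sqrt (K%:R : R).
have s0 : 0 < s by rewrite sqrtr_gt0 ltr0n.
have sK : s ^+ 2 = K%:R by rewrite sqr_sqrtr // ler0n.
set eta := 1 / (24 * s).
have eta_gt0 : 0 < eta by apply: divr_gt0 => //; apply: mulr_gt0.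
have rP : (mP%:R : R) ^+ 3 <= s ^+ 2 by rewrite sK -natrX ler_nat.
have rT : (mT%:R : R) ^+ 3 <= s ^+ 2 by rewrite sK -natrX ler_nat.
have etaP : 24 * (eta * mP%:R) <= 1 by apply: A1 => //; rewrite ler1n.
have etaT : 24 * (eta * mT%:R) <= 1 by apply: A1 => //; rewrite ler1n.
exists bool, (Act mP mT), 2%N, true, (psiV (mP:=mP) (mT:=mT) eta), (phiV (mP:=mP) (mT:=mT) eta).
split; first by apply: psi_norm; exact: A2.
move=> U mu alg hmu hsum hval.
pose P_ := fun th : Act mP mT => lin_mix (psiV (mP:=mP) (mT:=mT) eta) (thV th).
pose T_ := fun th : Act mP mT => lin_pref (phiV (mP:=mP) (mT:=mT) eta) (vtV th).
have HP_ : forall (th : Act mP mT) x a y, P_ th x a y = Pk eta th x a y.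
  by move=> th ? ? ?; rewrite /P_ lin_mix_eq.
have HT_ : forall (th : Act mP mT) t1 t2, T_ th t1 t2 = Tk eta th t1 t2.
  by move=> th ? ?; rewrite /T_ lin_pref_eq.
pose V th := \sum_u mu u * \sum_(k < K) Ex (stf (alg u) P_ T_ th) k [::]
     (fun h => Lb eta th (alg u h)).
pose b := K%:R * (eta / 4 * ((mP + mT)%:R * (1 / 2))).
have hsumV : #|{: Act mP mT}|%:R * b <= \sum_th V th.
  rewrite /V exchange_big /=.
  have -> : #|{: Act mP mT}|%:R * b = \sum_u mu u * (K%:R * (eta / 4 * ((mP + mT)%:R * (#|{: Act mP mT}|%:R / 2)))).
    by rewrite -mulr_suml hsum mul1r /b; field.
  apply: ler_sum => u _; rewrite -mulr_sumr; apply: ler_wpM2l => //.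
  rewrite exchange_big /=.
  have -> : K%:R * (eta / 4 * ((mP + mT)%:R * (#|{: Act mP mT}|%:R / 2))) =
     \sum_(k < K) (eta / 4 * ((mP + mT)%:R * (#|{: Act mP mT}|%:R / 2))).
    by rewrite sumr_const card_ord mulr_natl.
  apply: ler_sum => k _.
  apply: (assouad_k eta_gt0 etaP etaT HP_ HT_ (hval u)).
  rewrite /gam /eta; apply: A3 => //.
  by rewrite sK ler_nat ltnW.
have [th hth] := exists_ge ([ffun=> true], [ffun=> true]) hsumV.
exists (thV th), (vtV th); split.
  by split; [exact: sqnorm_th | exact: sqnorm_vt].
split.
- move=> x a; split=> [y|].
    by rewrite lin_mix_eq //; have /andP[h1 _] := Pk_bound eta_gt0 etaP th x a y; lra.
  by rewrite big_bool /= !lin_mix_eq // Pk_sum.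
- move=> t1 t2; rewrite !lin_pref_eq //.
  have /andP[h1 h2] := Tk_bound eta_gt0 etaT th t1 t2.
  split; first by apply/andP; split; lra.
  rewrite /Tk; move: (gT eta th t1) (gT eta th t2) => x y; by field.
- exists (@popt R mP mT th); exact: (popt_winner eta_gt0 (HP_ th) (HT_ th)).
- move=> pis wpis.
  apply: (@le_trans _ _ b).
    rewrite /b -sK natrD -[mP.+1%:R]natr1 -[mT.+1%:R]natr1.
    apply: A5 => //; rewrite ler1n //.
  apply: (le_trans hth); rewrite /V /exp_regret.
  apply: ler_sum => u _; apply: ler_wpM2l => //.
  rewrite unroll; apply: ler_sum => k _.
  apply: Ex_mono.
    move=> h e; exact: (step_ge0 eta_gt0 etaP etaT (HP_ th) (HT_ th) h e (hval u)).
  move=> h; have [v1 v2] := hval u h.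
  exact: (regterm_lb (HP_ th) (HT_ th) wpis v1 v2).
Qed.
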